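(* Let $K$ be a good triangulation of $P^n$ and $\sigma\in K$ a simplex with $\sigma\cap\mathbf H^n\neq\emptyset$. If $\sigma\cap\mathbf H_h=\emptyset$, then there is a unique $H_{i,\alpha}$ ($1\le i\le n$, $\alpha\in\{0,\infty\}$) such that $\sigma\cap\mathbf H^n\subset H_{i,\alpha}$, and moreover $\sigma\cap H'=\emptyset$ for every cubical face $H'$ other than $H_{i,\alpha}$.
   Context: $P^n=(\mathbb P^1_{\mathbb C})^n$ with coordinates $z_i$; $H_{i,\alpha}=\{z_i=\alpha\}$, $\alpha\in\{0,\infty\}$; a cubical face is a nonempty intersection of one or more of the $H_{i,\alpha}$; $\mathbf H^n=\bigcup H_{i,\alpha}$; $\mathbf H_h=\bigcup_{i<i',\alpha,\beta}(H_{i,\alpha}\cap H_{i',\beta})$; $\mathbf D^n=\bigcup_i\{z_i=1\}$. A good triangulation is a finite simplicial complex $K$ with a semi-algebraic homeomorphism $|K|\cong P^n$ (identifying them) such that $\mathbf D^n$ is a subcomplex, the image of each open simplex is a regular submanifold, every finite union of cubical faces is a full subcomplex (any simplex of $K$ whose vertices all lie in it belongs to it), and each $\{|z_i|\le1\}$ is a subcomplex. *)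

(* Defs.v *)
From HB Require Import structures.
From mathcomp Require Import all_boot all_order all_algebra.
From mathcomp Require Import boolp classical_sets reals.
From Stdlib Require List.

Set Implicit Arguments.
Unset Strict Implicit.
Unset Printing Implicit Defensive.

Import Order.TTheory GRing.Theory Num.Theory.
Local Open Scope ring_scope.
Local Open Scope classical_set_scope.

Inductive zinf := Zero | Infty.

Section Defs.
Variable R : realType.

(* complex numbers as pairs (a, b) = a + b i *)
Definition CC := (R * R)%type.
(* P^1_C = C ∪ {oo}; None is the point at infinity *)
Definition P1 := option CC.
(* P^n = (P^1)^n, coordinates z_i indexed by i : 'I_n (i.e. 0..n-1) *)
Definition Pn (n : nat) := 'I_n -> P1.

Definition zval (a : zinf) : P1 :=
  match a with Zero => Some (0, 0) | Infty => None end.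

Definition Hface (n : nat) (i : 'I_n) (a : zinf) : set (Pn n) :=
  [set z | z i = zval a].

Definition Hn (n : nat) : set (Pn n) :=
  [set z | exists (i : 'I_n) (a : zinf), Hface i a z].

Definition Hh (n : nat) : set (Pn n) :=
  [set z | exists (i i' : 'I_n) (a b : zinf),
      (i < i')%N /\ Hface i a z /\ Hface i' b z].

Definition Dn (n : nat) : set (Pn n) :=
  [set z | exists i : 'I_n, z i = Some (1, 0)].

Definition unit_disc (n : nat) (i : 'I_n) : set (Pn n) :=
  [set z | exists a b : R, z i = Some (a, b) /\ a ^+ 2 + b ^+ 2 <= 1].

Definition cubical_face (n : nat) (A : set (Pn n)) : Prop :=
  exists F : seq ('I_n * zinf),
    F <> [::] /\
    A = [set z | forall p, List.In p F -> Hface p.1 p.2 z] /\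
    A !=set0.

(* Topology of P^1_C: pulled back along the inverse stereographic projection
   P^1_C -> S^2 ⊂ R^3 (the Riemann sphere / chordal metric topology). *)
Definition sph (z : P1) : R * R * R :=
  match z with
  | None => (0, 0, 1)
  | Some (a, b) =>
      let r := a ^+ 2 + b ^+ 2 in
      (2 * a / (r + 1), 2 * b / (r + 1), (r - 1) / (r + 1))
  end.

Definition dP1 (z w : P1) : R :=
  `|(sph z).1.1 - (sph w).1.1| + `|(sph z).1.2 - (sph w).1.2|
  + `|(sph z).2 - (sph w).2|.

Definition dPn (n : nat) (z w : Pn n) : R := \sum_(i < n) dP1 (z i) (w i).

Definition dV (V : finType) (x y : V -> R) : R := \sum_(v : V) `|x v - y v|.

Definition cont_on (X Y : Type) (dX : X -> X -> R) (dY : Y -> Y -> R)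
    (A : set X) (f : X -> Y) : Prop :=
  forall x, A x -> forall e : R, 0 < e ->
    exists2 d : R, 0 < d &
      forall y, A y -> dX x y < d -> dY (f x) (f y) < e.

Definition simplicial_complex (V : finType) (K : {set {set V}}) : Prop :=
  @finset.set0 V \notin K /\
  (forall s t : {set V}, s \in K -> t \subset s -> t != @finset.set0 V -> t \in K).

Definition csimplex (V : finType) (s : {set V}) : set (V -> R) :=
  [set x | (forall v, 0 <= x v) /\ \sum_(v : V) x v = 1 /\
           (forall v, v \notin s -> x v = 0)].

Definition realization (V : finType) (K : {set {set V}}) : set (V -> R) :=
  [set x | exists2 s, s \in K & csimplex s x].

Definition vertex_pt (V : finType) (v : V) : V -> R :=
  fun w => (w == v)%:R.

Definition homeo (V : finType) (n : nat) (A : set (V -> R))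
    (h : (V -> R) -> Pn n) : Prop :=
  exists g : Pn n -> (V -> R),
    (forall x, A x -> g (h x) = x) /\
    (forall z, A (g z) /\ h (g z) = z) /\
    cont_on (@dV V) (@dPn n) A h /\
    cont_on (@dPn n) (@dV V) setT g.

Definition simplex_img (V : finType) (n : nat) (h : (V -> R) -> Pn n)
    (s : {set V}) : set (Pn n) := h @` csimplex s.

Definition subcomplex_by (V : finType) (n : nat) (K : {set {set V}})
    (h : (V -> R) -> Pn n) (A : set (Pn n)) (L : {set {set V}}) : Prop :=
  L \subset K /\
  (forall s t : {set V}, s \in L -> t \subset s -> t != @finset.set0 V -> t \in L) /\
  A = [set z | exists2 s, s \in L & simplex_img h s z].

Definition is_subcomplex (V : finType) (n : nat) (K : {set {set V}})
    (h : (V -> R) -> Pn n) (A : set (Pn n)) : Prop :=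
  exists L, subcomplex_by K h A L.

Definition is_full_subcomplex (V : finType) (n : nat) (K : {set {set V}})
    (h : (V -> R) -> Pn n) (A : set (Pn n)) : Prop :=
  exists L, subcomplex_by K h A L /\
    (forall s, s \in K -> (forall v, v \in s -> A (h (vertex_pt v))) ->
       s \in L).

Definition union_list (n : nat) (Fs : seq (set (Pn n))) : set (Pn n) :=
  [set z | exists2 A, List.In A Fs & A z].

Definition good_triangulation (V : finType) (n : nat) (K : {set {set V}})
    (h : (V -> R) -> Pn n) : Prop :=
  simplicial_complex K /\
  homeo (realization K) h /\
  is_subcomplex K h (@Dn n) /\
  (forall Fs : seq (set (Pn n)), (forall A, List.In A Fs -> cubical_face A) ->
      is_full_subcomplex K h (union_list Fs)) /\
  (forall i : 'I_n, is_subcomplex K h (unit_disc i)).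

End Defs.

(* Main.v *)
Require Import Defs.
From mathcomp Require Import all_boot all_order all_algebra.
From mathcomp Require Import boolp classical_sets reals.
From HB Require Import structures.
From mathcomp Require Import topology normedtype.
From mathcomp Require Import ring lra.
Import Order.TTheory GRing.Theory Num.Theory numFieldNormedType.Exports.
Set Implicit Arguments.
Unset Strict Implicit.
Local Open Scope ring_scope.
Local Open Scope classical_set_scope.

Section C.
Variable R : realType.

Definition Ufold (I : Type) (F : I -> set R) (r : seq I) : set R :=
  foldr (fun x acc => F x `|` acc) set0 r.

Lemma Ufold_closed (I : eqType) (F : I -> set R) r :
  (forall x, x \in r -> closed (F x)) -> closed (Ufold F r).
Proof.
elim: r => [|x r IH] cF /=; first exact: closed0.
apply: closedU; first by apply: cF; rewrite mem_head.
by apply: IH => y yr; apply: cF; rewrite in_cons yr orbT.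
Qed.

Lemma UfoldP (I : eqType) (F : I -> set R) r t :
  Ufold F r t <-> exists2 x, x \in r & F x t.
Proof.
elim: r => [|x r IH] /=; first by split=> // -[].
split.
  case=> [Fx|/IH [y yr Fy]]; first by exists x; rewrite ?mem_head.
  by exists y; rewrite // in_cons yr orbT.
case=> y; rewrite in_cons => /orP [/eqP ->|yr] Fy; first by left.
by right; apply/IH; exists y.
Qed.

Lemma conn01 (P : R -> Prop) (I : eqType) (r : seq I) (Q : I -> R -> Prop) :
  closed [set t | 0 <= t <= 1 /\ P t] ->
  (forall x, x \in r -> closed [set t | 0 <= t <= 1 /\ Q x t]) ->
  (forall t, 0 <= t <= 1 -> P t \/ exists2 x, x \in r & Q x t) ->
  (forall t x, x \in r -> 0 <= t <= 1 -> P t -> Q x t -> False) ->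
  P 0 -> P 1.
Proof.
move=> cP cQ cov dis P0.
set A := [set t : R | 0 <= t <= 1].
have cA : connected A.
  apply/connected_intervalP => x y Ax Ay z /andP[xz zy]; rewrite /A /=.
  move: Ax Ay; rewrite /A /= => /andP[x0 _] /andP[_ y1].
  by rewrite (le_trans x0 xz) (le_trans zy y1).
set B := [set t | 0 <= t <= 1 /\ P t].
have : B = A.
  apply: cA.
  - by exists 0; split => //; rewrite lexx ler01.
  - exists (~` Ufold (fun x => [set t | 0 <= t <= 1 /\ Q x t]) r).
      by rewrite openC; apply: Ufold_closed.
    apply/funext => t; apply/propext; split.
      move=> [t01 Pt]; split => // /UfoldP [x xr [_ Qx]].
      exact: (dis t x).
    move=> [t01 nU]; split => //.
    case: (cov t t01) => // -[x xr Qx]; exfalso; apply: nU.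
    by apply/UfoldP; exists x.
  - exists B => //; apply/funext => t; apply/propext; split.
      by move=> [t01 Pt]; split.
    by case.
move=> BA; have : B 1 by rewrite BA /A /= ler01 lexx.
by case.
Qed.
End C.

Section C.
Variable R : realType.
Lemma closed_zero (phi : R -> R) :
 (forall t, 0 <= t <= 1 -> forall e, 0 < e -> exists2 d, 0 < d &
    forall u, 0 <= u <= 1 -> `|t - u| < d -> `|phi t - phi u| < e) ->
 closed [set t | 0 <= t <= 1 /\ phi t = 0].
Proof.
move=> cphi t clt.
have t0 : 0 <= t.
  apply: (@closed_ge R 0 t); apply: (closureS _ clt) => x [/andP[]]; done.
have t1 : t <= 1.
  apply: (@closed_le R 1 t); apply: (closureS _ clt) => x [/andP[]]; done.
have t01 : 0 <= t <= 1 by rewrite t0 t1.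
split => //; case: (eqVneq (phi t) 0) => // ne.
have ep : 0 < `|phi t| by rewrite normr_gt0.
have [d dp H] := cphi t t01 _ ep.
have [u [[u01 pu] bu]] := clt _ (nbhsx_ballx t d dp).
move: bu; rewrite -ball_normE /ball_ /= => tu.
by have := H u u01 tu; rewrite pu subr0 ltxx.
Qed.
End C.

Section M.
Variable R : realType.
Variable n : nat.

Lemma dP1_sym (a b : P1 R) : dP1 a b = dP1 b a.
Proof. by rewrite /dP1 (distrC (sph a).1.1) (distrC (sph a).1.2) (distrC (sph a).2). Qed.

Lemma dP1_tri (a b c : P1 R) : dP1 a c <= dP1 a b + dP1 b c.
Proof.
rewrite /dP1.
have h1 := ler_distD (sph b).1.1 (sph a).1.1 (sph c).1.1.
have h2 := ler_distD (sph b).1.2 (sph a).1.2 (sph c).1.2.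
have h3 := ler_distD (sph b).2 (sph a).2 (sph c).2.
lra.
Qed.

Lemma dP1xx (a : P1 R) : dP1 a a = 0.
Proof. by rewrite /dP1 !subrr normr0 !addr0. Qed.

Lemma dP1_ge0 (a b : P1 R) : 0 <= dP1 a b.
Proof. by rewrite /dP1 !addr_ge0. Qed.

Lemma dP1_lip (a b p : P1 R) : `|dP1 a p - dP1 b p| <= dP1 a b.
Proof.
have h1 := dP1_tri a b p. have h2 := dP1_tri b a p. rewrite (dP1_sym b a) in h2.
rewrite ler_norml; apply/andP; split; lra.
Qed.

Lemma dP1_le_dPn (z w : Pn R n) k : dP1 (z k) (w k) <= dPn z w.
Proof.
rewrite /dPn (bigD1 k) //= lerDl; apply: sumr_ge0 => i _; exact: dP1_ge0.
Qed.

Lemma dP1_zval (a : P1 R) c : dP1 a (@zval R c) = 0 -> a = @zval R c.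
Proof.
rewrite /dP1 => H.
have [e1 [e2 e3]] : (sph a).1.1 = (sph (@zval R c)).1.1 /\ (sph a).1.2 = (sph (@zval R c)).1.2
   /\ (sph a).2 = (sph (@zval R c)).2.
  have g1 := normr_ge0 ((sph a).1.1 - (sph (@zval R c)).1.1).
  have g2 := normr_ge0 ((sph a).1.2 - (sph (@zval R c)).1.2).
  have g3 := normr_ge0 ((sph a).2 - (sph (@zval R c)).2).
  split; [|split]; apply/eqP; rewrite -subr_eq0 -normr_eq0 eq_le normr_ge0 andbT; lra.
clear H; case: c e1 e2 e3; case: a => [[x y]|] //=.
- move=> e1 e2 _; rewrite mulr0 mul0r in e1 e2.
  have r0 : 0 < x ^+ 2 + y ^+ 2 + 1 by rewrite ltr_wpDl // addr_ge0 // sqr_ge0.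
  have hx : 2 * x = 0.
    move: e1; move=> /eqP; rewrite mulf_eq0 invr_eq0 (gt_eqF r0) orbF => /eqP //.
  have hy : 2 * y = 0.
    move: e2; move=> /eqP; rewrite mulf_eq0 invr_eq0 (gt_eqF r0) orbF => /eqP //.
  have -> : x = 0 by lra.
  by have -> : y = 0 by lra.
- move=> _ _; rewrite !expr2 !mulr0 !add0r divr1 => H; exfalso; lra.
- move=> _ _ e3; exfalso.
  have r0 : 0 < x ^+ 2 + y ^+ 2 + 1 by rewrite ltr_wpDl // addr_ge0 // sqr_ge0.
  move: e3 => /(congr1 (fun v => v * (x ^+ 2 + y ^+ 2 + 1))).
  rewrite mulfVK ?(gt_eqF r0) // mul1r; lra.
Qed.
End M.

Section M.
Variable R : realType.
Variable n : nat.

Lemma zval_inj a c : @zval R a = zval R c -> a = c.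
Proof. by case: a; case: c. Qed.

Lemma face_uniq (z : Pn R n) i a k c : ~ Hh z -> Hface i a z -> Hface k c z ->
  i = k /\ a = c.
Proof.
rewrite /Hface /= => nH zi zk.
case: (ltngtP i k) => [ik|ki|eik].
- by exfalso; apply: nH; exists i, k, a, c.
- by exfalso; apply: nH; exists k, i, c, a.
- have e : i = k by apply: val_inj.
  by subst; split => //; apply: zval_inj; rewrite -zi -zk.
Qed.

Variable V : finType.
Implicit Types (s t : {set V}) (x y : V -> R).

Lemma csub s t x : t \subset s -> csimplex t x -> csimplex s x.
Proof.
move=> ts [h1 [h2 h3]]; split => //; split => // v vs; apply: h3.
by apply: contra vs => /(fintype.subsetP ts).
Qed.

Lemma cI s t x : csimplex s x -> csimplex t x -> csimplex (s :&: t) x.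
Proof.
move=> [h1 [h2 h3]] [_ [_ h3']]; split => //; split => // v.
rewrite inE negb_and => /orP [] ?; [exact: h3|exact: h3'].
Qed.

Lemma cne s x : csimplex s x -> exists v, v \in s.
Proof.
move=> [h1 [h2 h3]]; apply: contrapT => nv.
have : \sum_v x v = 0.
  apply: big1 => v _; apply: h3; apply/negP => vs; apply: nv; by exists v.
by rewrite h2 => /eqP; rewrite oner_eq0.
Qed.

Lemma cvert s v : v \in s -> csimplex s (vertex_pt R v).
Proof.
move=> vs; rewrite /vertex_pt; split; first by move=> w; rewrite ler0n.
split.
  rewrite (bigD1 v) //= eqxx big1 ?addr0 // => w wv; by rewrite (negbTE wv).
move=> w ws; case: eqP => // e; by move: ws; rewrite e vs.
Qed.

Definition seg x y (t : R) : V -> R := fun v => (1 - t) * x v + t * y v.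

Lemma cseg s x y (t : R) : csimplex s x -> csimplex s y -> 0 <= t <= 1 ->
  csimplex s (seg x y t).
Proof.
move=> [a1 [a2 a3]] [b1 [b2 b3]] /andP[t0 t1]; rewrite /seg; split.
  move=> v; have := a1 v; have := b1 v; nra.
split.
  by rewrite big_split /= -!mulr_sumr a2 b2 !mulr1 subrK.
by move=> v vs; rewrite a3 // b3 // !mulr0 addr0.
Qed.

Lemma dV_seg s x y (t u : R) : csimplex s x -> csimplex s y ->
  dV (seg x y t) (seg x y u) <= `|t - u| * 2.
Proof.
move=> [a1 [a2 _]] [b1 [b2 _]]; rewrite /dV /seg.
have e : forall v, `|(1 - t) * x v + t * y v - ((1 - u) * x v + u * y v)|
   = `|t - u| * `|y v - x v|.
  by move=> v; rewrite -normrM; congr `|_|; ring.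
under eq_bigr do rewrite e.
rewrite -mulr_sumr ler_wpM2l //.
apply: (le_trans (y := \sum_v (y v + x v))).
  apply: ler_sum => v _; apply: (le_trans (ler_normB _ _)).
  by rewrite !ger0_norm.
by rewrite big_split /= a2 b2.
Qed.
End M.

Section F.
Variable R : realType.
Variable n : nat.

Lemma seq_In (T : eqType) (x : T) (s : seq T) : x \in s -> List.In x s.
Proof.
elim: s => [//|y s IH]; rewrite in_cons => /orP [/eqP ->|xs] /=; [by left|by right; apply: IH].
Qed.

Definition allF : seq (set (Pn R n)) :=
  List.flat_map (fun j => [:: Hface j Zero; Hface j Infty]) (enum 'I_n).

Lemma allF_in A : List.In A allF <-> exists j a, A = Hface j a.
Proof.
rewrite /allF List.in_flat_map; split.
  move=> [j [_ /= [<-|[<-|//]]]]; [by exists j, Zero|by exists j, Infty].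
move=> [j [a ->]]; exists j; split; first by apply: seq_In; rewrite mem_enum.
by case: a => /=; [left|right; left].
Qed.

Lemma cubF A : List.In A allF -> cubical_face A.
Proof.
move=> /allF_in [j [a ->]]; exists [:: (j, a)]; split => //; split.
  apply/funext => z; apply/propext; split.
    by move=> hz p /= [<-|//].
  by move=> /= H; apply: (H (j, a)); left.
by exists (fun _ => zval R a); rewrite /Hface /=.
Qed.

Lemma union_allF z : union_list allF z <-> Hn z.
Proof.
split.
  by move=> [A /allF_in [j [a ->]] hz]; exists j, a.
move=> [j [a hz]]; exists (Hface j a) => //; apply/allF_in; by exists j, a.
Qed.
End F.

Definition tob (a : zinf) : bool := match a with Zero => false | Infty => true end.
Definition zb (b : bool) : zinf := if b then Infty else Zero.
Lemma zbK a : zb (tob a) = a. Proof. by case: a. Qed.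
Lemma tobK b : tob (zb b) = b. Proof. by case: b. Qed.

Theorem lemma4p8 (R : realType) (n : nat) (V : finType)
    (K : {set {set V}}) (h : (V -> R) -> Pn R n) (s : {set V}) :
  good_triangulation K h ->
  s \in K ->
  (simplex_img h s `&` @Hn R n) !=set0 ->
  simplex_img h s `&` @Hh R n = set0 ->
  exists ia : 'I_n * zinf,
    (simplex_img h s `&` @Hn R n `<=` @Hface R n ia.1 ia.2) /\
    (forall jb : 'I_n * zinf,
        simplex_img h s `&` @Hn R n `<=` @Hface R n jb.1 jb.2 -> jb = ia) /\
    (forall H' : set (Pn R n), cubical_face H' ->
        H' <> @Hface R n ia.1 ia.2 -> simplex_img h s `&` H' = set0).
Proof.
move=> [SC [[g [gh [hg [hc gc]]]] [_ [FULL _]]]] sK [z0 [Sz0 Hz0]] Hh0.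
have nHh : forall z, simplex_img h s z -> ~ Hh z.
  move=> z Sz Hz; have : (simplex_img h s `&` @Hh R n) z by [].
  by rewrite Hh0.
case: Hz0 => i [a zi].
have key : forall z, simplex_img h s z -> Hn z -> Hface i a z.
  move=> z1 Sz1 Hz1.
  have [L [[LK [Lcl Ueq]] Lfull]] := FULL (@allF R n) (@cubF R n).
  have toL : forall z, Hn z -> exists2 t, t \in L & simplex_img h t z.
    by move=> z /union_allF; rewrite Ueq.
  have inj : forall t x y, t \in K -> csimplex s x -> csimplex t y -> h x = h y ->
      csimplex (s :&: t) x.
    move=> t x y tK cx cy e.
    have ex : x = y.
      by rewrite -(gh x) ?e ?gh //; [exists t | exists s].
    by apply: cI => //; rewrite ex.
  case: (Sz0) => x0 cx0 hx0; case: (Sz1) => x1 cx1 hx1.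
  have [t0 t0L [y0 cy0 hy0]] := toL z0 (ex_intro _ i (ex_intro _ a zi)).
  have [t1 t1L [y1 cy1 hy1]] := toL z1 Hz1.
  have t0K : t0 \in K by apply: (fintype.subsetP LK).
  have t1K : t1 \in K by apply: (fintype.subsetP LK).
  have c0 := inj _ _ _ t0K cx0 cy0 (etrans hx0 (esym hy0)).
  have c1 := inj _ _ _ t1K cx1 cy1 (etrans hx1 (esym hy1)).
  set u := (s :&: t0) :|: (s :&: t1).
  have cu0 : csimplex u x0 by apply: csub c0; exact: finset.subsetUl.
  have cu1 : csimplex u x1 by apply: csub c1; exact: finset.subsetUr.
  have us : u \subset s by rewrite finset.subUset !finset.subsetIl.
  have uK : u \in K.
    apply: (SC.2 s u sK us); have [v vu] := cne cu0.
    by apply/set0Pn; exists v.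
  have uL : u \in L.
    apply: Lfull => // v; rewrite !inE => /orP [/andP [_ vt]|/andP [_ vt]];
      rewrite Ueq; [exists t0 => //|exists t1 => //]; exists (vertex_pt R v) => //;
      exact: cvert.
  set f := fun t : R => h (seg x0 x1 t).
  have cs : forall t : R, 0 <= t <= 1 -> csimplex u (seg x0 x1 t).
    by move=> t t01; apply: cseg.
  have fS : forall t : R, 0 <= t <= 1 -> simplex_img h s (f t).
    by move=> t t01; exists (seg x0 x1 t) => //; apply: csub us _; apply: cs.
  have fH : forall t : R, 0 <= t <= 1 -> Hn (f t).
    move=> t t01; apply/union_allF; rewrite Ueq; exists u => //.
    by exists (seg x0 x1 t) => //; apply: cs.
  have cF : forall k c, closed [set t | 0 <= t <= 1 /\ Hface k c (f t)].
    move=> k c.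
    have -> : [set t | 0 <= t <= 1 /\ Hface k c (f t)] =
              [set t | 0 <= t <= 1 /\ dP1 (f t k) (zval R c) = 0].
      apply/funext => t; apply/propext; split => -[t01 H]; split => //.
        by rewrite /Hface /= in H; rewrite H dP1xx.
      exact: dP1_zval.
    apply: closed_zero => t t01 e e0.
    have [d d0 Hd] := hc (seg x0 x1 t) (ex_intro2 _ _ u uK (cs t t01)) e e0.
    exists (d / 2); first by rewrite divr_gt0.
    move=> v v01 tv.
    apply: le_lt_trans (dP1_lip _ _ _) _.
    apply: le_lt_trans (dP1_le_dPn _ _ k) _.
    apply: Hd; first by exists u => //; apply: cs.
    apply: le_lt_trans (dV_seg _ _ cu0 cu1) _.
    by rewrite -ltr_pdivlMr // .
  set ab := tob a.
  have P1 : Hface i a (f 1).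
    apply: (conn01 (P := fun t => Hface i a (f t))
      (r := [seq x <- enum {: 'I_n * bool} | x != (i, ab)])
      (Q := fun x t => Hface x.1 (zb x.2) (f t))).
    - exact: cF.
    - move=> x _; exact: cF.
    - move=> t t01; have [k [c kc]] := fH t t01.
      case: (eqVneq (k, tob c) (i, ab)) => [e|ne].
        left; case: e => <- ec.
        have ca : c = a by rewrite -(zbK c) ec /ab zbK.
        by rewrite -ca.
      right; exists (k, tob c); first by rewrite mem_filter ne mem_enum.
      by rewrite /= zbK.
    - move=> t [k c]; rewrite mem_filter => /andP [ne _] t01 Pt Qt.
      have [ik ac] := face_uniq (nHh _ (fS t t01)) Pt Qt.
      rewrite /= in ik ac; by move: ne; rewrite -ik /ab ac tobK eqxx.
    - rewrite /f /=.
      have -> : seg x0 x1 0 = x0 by apply/funext => v; rewrite /seg subr0 mul1r mul0r addr0.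
      by rewrite hx0.
  have -> : z1 = f 1.
    by rewrite /f -hx1; congr h; apply/funext => v; rewrite /seg subrr mul0r add0r mul1r.
  exact: P1.
exists (i, a); split; [|split].
- by move=> z [Sz Hz]; exact: key.
- move=> [j b] /= sub.
  have := sub z0 (conj Sz0 (ex_intro _ i (ex_intro _ a zi))) => zj.
  by have [-> ->] := face_uniq (nHh _ Sz0) zj zi.
- move=> H' [F [Fne [HF _]]] neq.
  apply/funext => z; apply/propext; split => // -[Sz H'z]; apply: neq.
  rewrite HF in H'z.
  case: F Fne HF H'z => [//|p F'] _ HF H'z.
  have hp := H'z p (or_introl erefl).
  have za := key z Sz (ex_intro _ p.1 (ex_intro _ p.2 hp)).
  have allq : forall q, List.In q (p :: F') -> q = (i, a).
    move=> q qin; have [e1 e2] := face_uniq (nHh _ Sz) (H'z q qin) za.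
    by case: q qin e1 e2 {H'z} => q1 q2 /= _ -> ->.
  rewrite HF; apply/funext => w; apply/propext; split.
    by move=> Hw; have := Hw p (or_introl erefl); rewrite (allq p (or_introl erefl)).
  by move=> Hw q qin; rewrite (allq q qin).
Qed.
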